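(* For each completely regular frame $L$, $\overline{\mathrm{C}}(\mathfrak{B}(L))$ is isomorphic to the Dedekind–MacNeille completion of $\overline{\mathrm{C}}(L)$.
   Context: $\mathbb{Q}$ is the rationals; $a^\ast$ is the pseudocomplement; $\mathfrak{B}(L)=\{a\in L\mid a=a^{\ast\ast}\}$ is the Booleanization of $L$ (a complete Boolean algebra, hence a frame). The frame $\mathfrak{L}(\overline{\mathbb{IR}})$ is presented by generators $(r,\textsf{---})$, $(\textsf{---},s)$ ($r,s\in\mathbb{Q}$) subject to (r1) $(r,\textsf{---})\wedge(\textsf{---},s)=0$ whenever $r\ge s$; (r3) $(r,\textsf{---})=\bigvee_{s>r}(s,\textsf{---})$; (r4) $(\textsf{---},s)=\bigvee_{r<s}(\textsf{---},r)$. For a frame $M$, $\overline{\mathrm{C}}(M)$ is the set of frame homomorphisms $f\colon\mathfrak{L}(\overline{\mathbb{IR}})\to M$ with $f(r,\textsf{---})\vee f(\textsf{---},s)=1$ whenever $r<s$ (extended continuous real functions), ordered by $f\le g$ iff $f(r,\textsf{---})\le g(r,\textsf{---})$ and $g(\textsf{---},s)\le f(\textsf{---},s)$ for all $r,s$. A Dedekind–MacNeille completion of a poset is a join- and meet-dense embedding into a complete lattice. *)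

(* Defs.v *)
From mathcomp Require Import all_boot all_order all_algebra.
Set Implicit Arguments. Unset Strict Implicit. Unset Printing Implicit Defensive.
Import Order.TTheory GRing.Theory Num.Theory.
Local Open Scope ring_scope.

Record frameOps := FrameOps {
  fcar :> Type;
  fle : fcar -> fcar -> Prop;
  fsup : (fcar -> Prop) -> fcar;
  fmeet : fcar -> fcar -> fcar
}.

Record is_frame (L : frameOps) : Prop := {
  fle_refl : forall x : L, fle x x;
  fle_trans : forall x y z : L, fle x y -> fle y z -> fle x z;
  fle_anti : forall x y : L, fle x y -> fle y x -> x = y;
  fsup_ub : forall (S : L -> Prop) x, S x -> fle x (fsup S);
  fsup_least : forall (S : L -> Prop) b, (forall x, S x -> fle x b) -> fle (fsup S) b;
  fmeet_lbl : forall x y : L, fle (fmeet x y) x;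
  fmeet_lbr : forall x y : L, fle (fmeet x y) y;
  fmeet_glb : forall x y z : L, fle z x -> fle z y -> fle z (fmeet x y);
  fdistr : forall (a : L) (S : L -> Prop),
      fmeet a (fsup S) = fsup (fun y => exists s, S s /\ y = fmeet a s)
}.

Record frame := Frame { fops :> frameOps; fax : is_frame fops }.

Section Derived.
Variable L : frameOps.
Definition fbot : L := fsup (fun _ : L => False).
Definition ftop : L := fsup (fun _ : L => True).
Definition fjoin (a b : L) : L := fsup (fun x => x = a \/ x = b).
Definition pc (a : L) : L := fsup (fun x => fmeet x a = fbot).
End Derived.

Definition rather_below (L : frameOps) (a b : L) : Prop :=
  fjoin (pc a) b = ftop L.

Definition completely_below (L : frameOps) (a b : L) : Prop :=
  exists c : rat -> L, c 0 = a /\ c 1 = b /\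
    forall p q : rat, 0 <= p -> p < q -> q <= 1 -> rather_below (c p) (c q).

Definition completely_regular (L : frameOps) : Prop :=
  forall a : L, a = fsup (fun x => completely_below x a).

Section PC.
Variable L : frame.
Let A := fax L.

Lemma fbot_least (x : L) : fle (fbot L) x.
Proof. apply: (fsup_least A) => y []. Qed.

Lemma fmeet_comm (x y : L) : fmeet x y = fmeet y x.
Proof.
apply: (fle_anti A); apply: (fmeet_glb A);
  solve [apply: (fmeet_lbl A) | apply: (fmeet_lbr A)].
Qed.

Lemma fmeet_mono (x x' y : L) : fle x x' -> fle (fmeet x y) (fmeet x' y).
Proof.
move=> h; apply: (fmeet_glb A); last exact: (fmeet_lbr A).
exact: (fle_trans A (fmeet_lbl A _ _) h).
Qed.

Lemma pc_spec (x a : L) : fle x (pc a) <-> fmeet x a = fbot L.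
Proof.
split; last by move=> h; apply: (fsup_ub A).
move=> h; apply: (fle_anti A); last exact: fbot_least.
apply: (fle_trans A (fmeet_mono a h)).
rewrite /pc fmeet_comm (fdistr A).
apply: (fsup_least A) => y [s [hs ->]].
by rewrite fmeet_comm hs; apply: (fle_refl A).
Qed.

Lemma pc_pc_ge (x : L) : fle x (pc (pc x)).
Proof.
apply/pc_spec; rewrite fmeet_comm; apply/pc_spec; exact: (fle_refl A).
Qed.

Lemma pc_anti (x y : L) : fle x y -> fle (pc y) (pc x).
Proof.
move=> h; apply/pc_spec; apply: (fle_anti A); last exact: fbot_least.
rewrite fmeet_comm.
apply: (fle_trans A (fmeet_mono (pc y) h)); rewrite fmeet_comm.
move/pc_spec: (fle_refl A (pc y)) => ->; exact: (fle_refl A).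
Qed.

Lemma pc3 (x : L) : pc (pc (pc x)) = pc x.
Proof.
apply: (fle_anti A); last exact: pc_pc_ge.
apply: pc_anti; exact: pc_pc_ge.
Qed.

Lemma regular_pcpc (x : L) : pc (pc x) = pc (pc (pc (pc x))).
Proof. by rewrite pc3. Qed.

Lemma regular_meet (a b : L) : a = pc (pc a) -> b = pc (pc b) ->
  fmeet a b = pc (pc (fmeet a b)).
Proof.
move=> ha hb; apply: (fle_anti A); first exact: pc_pc_ge.
apply: (fmeet_glb A).
  by rewrite {2}ha; apply/pc_anti/pc_anti; apply: (fmeet_lbl A).
by rewrite {2}hb; apply/pc_anti/pc_anti; apply: (fmeet_lbr A).
Qed.

Definition Bcar := {a : L | a = pc (pc a)}.

Definition Bsup (S : Bcar -> Prop) : Bcar :=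
  exist _ (pc (pc (fsup (fun x => exists y : Bcar, S y /\ x = proj1_sig y))))
        (regular_pcpc _).

Definition Bmeet (a b : Bcar) : Bcar :=
  exist _ (fmeet (proj1_sig a) (proj1_sig b))
        (regular_meet (proj2_sig a) (proj2_sig b)).

Definition Ble (a b : Bcar) : Prop := fle (proj1_sig a) (proj1_sig b).

End PC.

Definition Booleanization (L : frame) : frameOps :=
  @FrameOps (Bcar L) (@Ble L) (@Bsup L) (@Bmeet L).

(* Extended continuous real functions on a frame M.                    *)
(* A frame homomorphism  f : L(IR-bar) -> M  is, by definition of the  *)
(* presented frame L(IR-bar), the same as an assignment of the         *)
(* generators  (r,-) |-> cl r,  (-,s) |-> cu s  in M satisfying the    *)
(* relations (r1), (r3), (r4) in M.                                    *)

Record cbar (M : frameOps) := Cbar {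
  cl : rat -> M;
  cu : rat -> M;
  cbar_r1 : forall r s : rat, s <= r -> fmeet (cl r) (cu s) = fbot M;
  cbar_r3 : forall r : rat, cl r = fsup (fun x => exists s : rat, r < s /\ x = cl s);
  cbar_r4 : forall s : rat, cu s = fsup (fun x => exists r : rat, r < s /\ x = cu r);
  cbar_ext : forall r s : rat, r < s -> fjoin (cl r) (cu s) = ftop M
}.

Definition cbar_le (M : frameOps) (f g : cbar M) : Prop :=
  (forall r : rat, fle (cl f r) (cl g r)) /\ (forall s : rat, fle (cu g s) (cu f s)).

Definition is_lub (T : Type) (le : T -> T -> Prop) (S : T -> Prop) (x : T) : Prop :=
  (forall y, S y -> le y x) /\ (forall z, (forall y, S y -> le y z) -> le x z).

Definition is_glb (T : Type) (le : T -> T -> Prop) (S : T -> Prop) (x : T) : Prop :=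
  (forall y, S y -> le x y) /\ (forall z, (forall y, S y -> le z y) -> le z x).

Definition complete_lattice (T : Type) (le : T -> T -> Prop) : Prop :=
  [/\ (forall x, le x x),
      (forall x y z, le x y -> le y z -> le x z),
      (forall x y, le x y -> le y x -> x = y)
    & (forall S : T -> Prop, exists x, is_lub le S x)].

Definition DM_completion (P Q : Type) (leP : P -> P -> Prop) (leQ : Q -> Q -> Prop)
    (e : P -> Q) : Prop :=
  [/\ complete_lattice leQ,
      (forall x y, leP x y <-> leQ (e x) (e y)),
      (forall y, is_lub leQ (fun z => exists x, z = e x /\ leQ z y) y)
    & (forall y, is_glb leQ (fun z => exists x, z = e x /\ leQ y z) y)].

(* Main.v *)
Require Import Defs.
From mathcomp Require Import all_boot all_order all_algebra.
From mathcomp Require Import ring lra.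
From Stdlib Require Import FunctionalExtensionality PropExtensionality ProofIrrelevance.
Set Implicit Arguments. Unset Strict Implicit. Unset Printing Implicit Defensive.
Import Order.TTheory GRing.Theory Num.Theory.
Local Open Scope ring_scope.

Lemma fsup_ext (M : frameOps) (S T : M -> Prop) :
  (forall x, S x <-> T x) -> fsup S = fsup T.
Proof.
move=> h; f_equal; apply: functional_extensionality => x.
by apply: propositional_extensionality.
Qed.

Lemma midQ (r s : rat) : r < s -> r < (r + s) / 2 /\ (r + s) / 2 < s.
Proof. move=> h; split; lra. Qed.

Section Gen.
Variable M : frame.
Let A := fax M.

Lemma le_top (x : M) : fle x (ftop M).
Proof. by apply: (fsup_ub A). Qed.

Lemma top_eq (x : M) : fle (ftop M) x -> x = ftop M.
Proof. by move=> h; apply: (fle_anti A) => //; apply: le_top. Qed.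

Lemma bot_eq (x : M) : fle x (fbot M) -> x = fbot M.
Proof. by move=> h; apply: (fle_anti A) => //; apply: fbot_least. Qed.

Lemma join_l (a b : M) : fle a (fjoin a b).
Proof. by apply: (fsup_ub A); left. Qed.
Lemma join_r (a b : M) : fle b (fjoin a b).
Proof. by apply: (fsup_ub A); right. Qed.
Lemma join_least (a b c : M) : fle a c -> fle b c -> fle (fjoin a b) c.
Proof. by move=> ha hb; apply: (fsup_least A) => x [->|->]. Qed.
Lemma join_comm (a b : M) : fjoin a b = fjoin b a.
Proof. by apply: fsup_ext => x; split => -[]; auto. Qed.
Lemma join_mono (a a' b b' : M) : fle a a' -> fle b b' -> fle (fjoin a b) (fjoin a' b').
Proof.
move=> h1 h2; apply: join_least.
  exact: (fle_trans A h1 (join_l _ _)).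
exact: (fle_trans A h2 (join_r _ _)).
Qed.

Lemma pc_meet_bot (a : M) : fmeet (pc a) a = fbot M.
Proof. by apply/pc_spec; apply: (fle_refl A). Qed.

Lemma top_pc (a b : M) : fjoin a b = ftop M -> fle (pc a) b.
Proof.
move=> h.
have h1 : fle (pc a) (fmeet (pc a) (fjoin a b)).
  by apply: (fmeet_glb A); [apply: (fle_refl A) | rewrite h; apply: le_top].
apply: (fle_trans A h1); rewrite (fdistr A).
apply: (fsup_least A) => y [s [[->|->] ->]].
  rewrite pc_meet_bot; exact: fbot_least.
exact: (fmeet_lbr A).
Qed.

Lemma rb_pcpc (a b : M) : fjoin (pc a) b = ftop M -> fle (pc (pc a)) b.
Proof. exact: top_pc. Qed.

Lemma rb_le (a b : M) : fjoin (pc a) b = ftop M -> fle a b.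
Proof. by move=> h; apply: (fle_trans A (pc_pc_ge a)); apply: rb_pcpc. Qed.

Lemma pc_bot : pc (fbot M) = ftop M.
Proof. apply: top_eq; apply/pc_spec; apply: bot_eq; exact: (fmeet_lbr A). Qed.

Lemma pc_top : pc (ftop M) = fbot M.
Proof.
apply: bot_eq; rewrite -(pc_meet_bot (ftop M)).
by apply: (fmeet_glb A); [apply: (fle_refl A) | apply: le_top].
Qed.

Lemma pcpc_mono (x y : M) : fle x y -> fle (pc (pc x)) (pc (pc y)).
Proof. by move=> h; apply/pc_anti/pc_anti. Qed.

Lemma le_pc_meet (u x : M) : fle u (pc x) -> fmeet u (pc (pc x)) = fbot M.
Proof.
move=> h; apply: bot_eq; rewrite -(pc_meet_bot (pc x)) [X in fle _ X]fmeet_comm.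
exact: fmeet_mono h.
Qed.

Lemma disj_pcpc (x y : M) : fmeet x y = fbot M ->
  fmeet (pc (pc x)) (pc (pc y)) = fbot M.
Proof.
move=> h; apply: le_pc_meet.
have : fle x (pc y) by apply/pc_spec.
by move/pcpc_mono; rewrite pc3.
Qed.

Lemma cl_anti (f : cbar M) (r t : rat) : r <= t -> fle (cl f t) (cl f r).
Proof.
rewrite le_eqVlt => /orP [/eqP->|h]; first exact: (fle_refl A).
rewrite [X in fle _ X](cbar_r3 f r); apply: (fsup_ub A); by exists t.
Qed.

Lemma cu_le_pc (f : cbar M) (r s : rat) : s <= r -> fle (cu f s) (pc (cl f r)).
Proof. by move=> h; apply/pc_spec; rewrite fmeet_comm cbar_r1. Qed.

Lemma pc_le_cu (f : cbar M) (r s : rat) : r < s -> fle (pc (cl f r)) (cu f s).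
Proof. by move=> h; apply: top_pc; apply: cbar_ext. Qed.

Lemma cbar_le_cl (f g : cbar M) :
  (forall r, fle (cl f r) (cl g r)) -> cbar_le f g.
Proof.
move=> h; split => // s; rewrite [X in fle X _](cbar_r4 g s).
apply: (fsup_least A) => x [r [hr ->]].
apply: (fle_trans A (cu_le_pc g (lexx r))).
apply: (fle_trans A (pc_anti (h r))); exact: pc_le_cu.
Qed.

Lemma cbar_rb (f : cbar M) (r s : rat) : r < s ->
  fjoin (pc (cl f s)) (cl f r) = ftop M.
Proof.
move=> h; apply: top_eq; rewrite -(cbar_ext f h) join_comm.
apply: join_mono; [exact: cu_le_pc | exact: (fle_refl A)].
Qed.

Lemma cbar_eq (f g : cbar M) : (forall r, cl f r = cl g r) ->
  (forall s, cu f s = cu g s) -> f = g.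
Proof.
case: f => cf uf a1 a3 a4 a5; case: g => cg ug b1 b3 b4 b5 /= h1 h2.
have e1 : cf = cg by apply: functional_extensionality.
have e2 : uf = ug by apply: functional_extensionality.
subst; f_equal; apply: proof_irrelevance.
Qed.

Lemma cbar_le_anti (f g : cbar M) : cbar_le f g -> cbar_le g f -> f = g.
Proof.
move=> [h1 h2] [h3 h4]; apply: cbar_eq => r; apply: (fle_anti A); auto.
Qed.

Section Mk.
Variable c : rat -> M.
Hypothesis h3 : forall r, c r = fsup (fun x => exists s, r < s /\ x = c s).
Hypothesis hrb : forall r s, r < s -> fjoin (pc (c s)) (c r) = ftop M.

Definition mk_cu (s : rat) : M := fsup (fun x => exists t, t < s /\ x = pc (c t)).

Lemma c_anti (r t : rat) : r < t -> fle (c t) (c r).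
Proof. move=> h; rewrite [X in fle _ X](h3 r); apply: (fsup_ub A); by exists t. Qed.

Lemma mk_r1 r s : s <= r -> fmeet (c r) (mk_cu s) = fbot M.
Proof.
move=> h; apply: bot_eq; rewrite /mk_cu (fdistr A).
apply: (fsup_least A) => y [z [[t [ht ->]] ->]].
have htr : t < r by apply: (lt_le_trans ht h).
apply: (fle_trans A (fmeet_mono _ (c_anti htr))).
rewrite fmeet_comm pc_meet_bot; exact: (fle_refl A).
Qed.

Lemma mk_r3 r : c r = fsup (fun x => exists s, r < s /\ x = c s).
Proof. exact: h3. Qed.

Lemma mk_r4 s : mk_cu s = fsup (fun x => exists r, r < s /\ x = mk_cu r).
Proof.
apply: (fle_anti A).
  apply: (fsup_least A) => x [t [ht ->]].
  have [m1 m2] := midQ ht.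
  apply: (fle_trans A _ (fsup_ub A _)); last by exists ((t + s) / 2); split.
  by apply: (fsup_ub A); exists t.
apply: (fsup_least A) => x [r [hr ->]].
apply: (fsup_least A) => y [t [ht ->]].
apply: (fsup_ub A); exists t; split => //; exact: lt_trans ht hr.
Qed.

Lemma mk_ext r s : r < s -> fjoin (c r) (mk_cu s) = ftop M.
Proof.
move=> h; have [m1 m2] := midQ h.
apply: top_eq; rewrite -(hrb m1) join_comm.
apply: join_mono; first exact: (fle_refl A).
by apply: (fsup_ub A); exists ((r + s) / 2).
Qed.

Definition mk_cbar : cbar M := Cbar mk_r1 mk_r3 mk_r4 mk_ext.
End Mk.

Section Neg.
Variable f : cbar M.
Lemma neg_r1 r s : s <= r -> fmeet (cu f (- r)) (cl f (- s)) = fbot M.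
Proof. by move=> h; rewrite fmeet_comm cbar_r1 // lerN2. Qed.
Lemma neg_r3 r : cu f (- r) = fsup (fun x => exists s, r < s /\ x = cu f (- s)).
Proof.
rewrite cbar_r4; apply: fsup_ext => x; split => -[t [ht ->]].
  by exists (- t); rewrite opprK ltrNr.
by exists (- t); rewrite ltrN2.
Qed.
Lemma neg_r4 s : cl f (- s) = fsup (fun x => exists r, r < s /\ x = cl f (- r)).
Proof.
rewrite cbar_r3; apply: fsup_ext => x; split => -[t [ht ->]].
  by exists (- t); rewrite opprK ltrNl.
by exists (- t); rewrite ltrN2.
Qed.
Lemma neg_ext r s : r < s -> fjoin (cu f (- r)) (cl f (- s)) = ftop M.
Proof. by move=> h; rewrite join_comm cbar_ext // ltrN2. Qed.
Definition neg_cbar : cbar M := Cbar neg_r1 neg_r3 neg_r4 neg_ext.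
End Neg.

Lemma neg_le (f g : cbar M) : cbar_le f g -> cbar_le (neg_cbar g) (neg_cbar f).
Proof. by move=> [h1 h2]; split => r /=. Qed.

Lemma neg_neg (f : cbar M) : neg_cbar (neg_cbar f) = f.
Proof. by apply: cbar_eq => r /=; rewrite opprK. Qed.

Section Bool.
Hypothesis hB : forall x : M, pc (pc x) = x.

Lemma bool_join (x : M) : fjoin x (pc x) = ftop M.
Proof.
set j := fjoin x (pc x).
have hj : pc j = fbot M.
  apply: bot_eq; rewrite -(pc_meet_bot j).
  apply: (fmeet_glb A); first exact: (fle_refl A).
  apply: (fle_trans A _ (join_r _ _)); apply: pc_anti; exact: join_l.
by rewrite -(hB j) hj pc_bot.
Qed.

Lemma bool_rb (c : rat -> M)
  (h3 : forall r, c r = fsup (fun x => exists s, r < s /\ x = c s)) :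
  forall r s, r < s -> fjoin (pc (c s)) (c r) = ftop M.
Proof.
move=> r s h; apply: top_eq; rewrite -(bool_join (c s)) join_comm.
apply: join_mono; first exact: (fle_refl A).
exact: c_anti.
Qed.

Variable S : cbar M -> Prop.
Definition lub_c (r : rat) : M := fsup (fun x => exists g, S g /\ x = cl g r).
Lemma lub_h3 r : lub_c r = fsup (fun x => exists s, r < s /\ x = lub_c s).
Proof.
apply: (fle_anti A).
  apply: (fsup_least A) => x [g [hg ->]]; rewrite cbar_r3.
  apply: (fsup_least A) => y [s [hs ->]].
  apply: (fle_trans A _ (fsup_ub A (ex_intro _ s (conj hs erefl)))).
  by rewrite /lub_c; apply: (fsup_ub A); exists g.
apply: (fsup_least A) => x [s [hs ->]].
apply: (fsup_least A) => y [g [hg ->]].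
apply: (fle_trans A (cl_anti g (ltW hs))).
by rewrite /lub_c; apply: (fsup_ub A); exists g.
Qed.

Definition lub_cbar : cbar M := mk_cbar lub_h3 (bool_rb lub_h3).

Lemma lub_cbar_spec : is_lub (@cbar_le M) S lub_cbar.
Proof.
split.
  move=> g hg; apply: cbar_le_cl => r /=; by apply: (fsup_ub A); exists g.
move=> z hz; apply: cbar_le_cl => r /=; apply: (fsup_least A) => x [g [hg ->]].
by case: (hz g hg).
Qed.
End Bool.

Lemma cbar_complete (hB : forall x : M, pc (pc x) = x) :
  complete_lattice (@cbar_le M).
Proof.
split.
- by move=> x; split => r; apply: (fle_refl A).
- move=> x y z [h1 h2] [h3 h4]; split => r.
    exact: (fle_trans A (h1 r) (h3 r)).
  exact: (fle_trans A (h4 r) (h2 r)).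
- exact: cbar_le_anti.
- by move=> S; exists (lub_cbar hB S); apply: lub_cbar_spec.
Qed.

End Gen.

Section BoolL.
Variable L : frame.
Let A := fax L.

Lemma Beq (a b : Bcar L) : proj1_sig a = proj1_sig b -> a = b.
Proof.
case: a => a ha; case: b => b hb /= e; subst; f_equal; apply: proof_irrelevance.
Qed.

Lemma pcpc_idem (x : L) : pc (pc (pc (pc x))) = pc (pc x).
Proof. by rewrite pc3. Qed.

Lemma reg (y : Bcar L) : proj1_sig y = pc (pc (proj1_sig y)).
Proof. exact: proj2_sig y. Qed.

Lemma pcpc_meet_reg (a X : L) : a = pc (pc a) ->
  fmeet a (pc (pc X)) = pc (pc (fmeet a X)).
Proof.
move=> ha; apply: (fle_anti A).
  apply/pc_spec; rewrite fmeet_comm.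
  have h1 : fle (fmeet (pc (fmeet a X)) a) (pc X).
    apply/pc_spec; apply: bot_eq; rewrite -(pc_meet_bot (fmeet a X)).
    apply: (fmeet_glb A).
      exact: (fle_trans A (fmeet_lbl A _ _) (fmeet_lbl A _ _)).
    apply: (fmeet_glb A).
      exact: (fle_trans A (fmeet_lbl A _ _) (fmeet_lbr A _ _)).
    exact: (fmeet_lbr A).
  have := le_pc_meet h1 => h2.
  apply: bot_eq; rewrite -h2.
  apply: (fmeet_glb A); last exact: (fle_trans A (fmeet_lbr A _ _) (fmeet_lbr A _ _)).
  apply: (fmeet_glb A); first exact: (fmeet_lbl A).
  exact: (fle_trans A (fmeet_lbr A _ _) (fmeet_lbl A _ _)).
apply: (fmeet_glb A).
  rewrite [X in fle _ X]ha; apply: pcpc_mono; exact: (fmeet_lbl A).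
apply: pcpc_mono; exact: (fmeet_lbr A).
Qed.

Lemma BL_is_frame : is_frame (Booleanization L).
Proof.
split.
- by move=> x; apply: (fle_refl A).
- by move=> x y z; apply: (fle_trans A).
- by move=> x y h1 h2; apply: Beq; apply: (fle_anti A).
- move=> S x hx; rewrite /fle /= /Ble /=.
  apply: (fle_trans A _ (pc_pc_ge _)); apply: (fsup_ub A); by exists x.
- move=> S b hb; rewrite /fle /= /Ble /= (reg b); apply: pcpc_mono.
  apply: (fsup_least A) => x [y [hy ->]]; exact: hb.
- by move=> x y; apply: (fmeet_lbl A).
- by move=> x y; apply: (fmeet_lbr A).
- by move=> x y z; apply: (fmeet_glb A).
- move=> a S; apply: Beq => /=.
  rewrite pcpc_meet_reg; last exact: reg.
  rewrite (fdistr A); congr (pc (pc _)); apply: fsup_ext => x; split.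
    move=> [s [[y [hy ->]] ->]]; exists (Bmeet a y); split => //; by exists y.
  move=> [y [[s [hs ->]] ->]] /=; exists (proj1_sig s); split => //; by exists s.
Qed.

Definition BLf : frame := Frame BL_is_frame.
Let B := fax BLf.

Lemma BL_bot : proj1_sig (fbot BLf) = fbot L.
Proof.
rewrite /= (_ : fsup _ = fbot L) ?pc_bot ?pc_top //.
by apply: fsup_ext => x; split => [[y []]|[]].
Qed.

Lemma top_reg : ftop L = pc (pc (ftop L)).
Proof. by rewrite pc_top pc_bot. Qed.

Lemma BL_top : proj1_sig (ftop BLf) = ftop L.
Proof.
apply: top_eq => /=; apply: (fle_trans A _ (pc_pc_ge _)).
apply: (fsup_ub A); by exists (exist _ (ftop L) top_reg).
Qed.

Lemma BL_pc (a : BLf) : proj1_sig (pc a) = pc (proj1_sig a).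
Proof.
apply: (fle_anti A).
  apply/pc_spec.
  have := pc_meet_bot a => /(f_equal (@proj1_sig _ _)); rewrite BL_bot => <-.
  by [].
have hq : pc (proj1_sig a) = pc (pc (pc (proj1_sig a))) by rewrite pc3.
have : fle (exist _ _ hq : BLf) (pc a).
  apply/pc_spec; apply: Beq; rewrite BL_bot /=.
  exact: pc_meet_bot.
by [].
Qed.

Lemma BL_bool (x : BLf) : pc (pc x) = x.
Proof. by apply: Beq; rewrite !BL_pc -reg. Qed.

Section E.
Variable f : cbar L.
Definition e_cl (r : rat) : BLf := exist _ (pc (pc (cl f r))) (regular_pcpc _).
Definition e_cu (s : rat) : BLf := exist _ (pc (pc (cu f s))) (regular_pcpc _).

Lemma e_r1 r s : s <= r -> fmeet (e_cl r) (e_cu s) = fbot BLf.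
Proof. move=> h; apply: Beq; rewrite BL_bot /=; apply: disj_pcpc; exact: cbar_r1. Qed.

Lemma pcpc_fsup_eq (S T : L -> Prop) :
  (forall x, S x -> fle x (pc (pc (fsup T)))) ->
  (forall y, T y -> fle y (pc (pc (fsup S)))) ->
  pc (pc (fsup S)) = pc (pc (fsup T)).
Proof.
move=> h1 h2; apply: (fle_anti A).
  rewrite -[X in fle _ X]pcpc_idem; apply: pcpc_mono; exact: (fsup_least A).
rewrite -[X in fle _ X]pcpc_idem; apply: pcpc_mono; exact: (fsup_least A).
Qed.

Lemma e_r3 r : e_cl r = fsup (fun x => exists s, r < s /\ x = e_cl s).
Proof.
apply: Beq => /=; rewrite [in LHS]cbar_r3; apply: pcpc_fsup_eq.
  move=> x [s [hs ->]]; apply: (fle_trans A _ (pc_pc_ge _)).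
  apply: (fle_trans A (pc_pc_ge _)).
  apply: (fsup_ub A); exists (e_cl s); split => //; by exists s.
move=> y [z [[s [hs ->]] ->]] /=; apply: pcpc_mono; apply: (fsup_ub A); by exists s.
Qed.

Lemma e_r4 s : e_cu s = fsup (fun x => exists r, r < s /\ x = e_cu r).
Proof.
apply: Beq => /=; rewrite [in LHS]cbar_r4; apply: pcpc_fsup_eq.
  move=> x [r [hr ->]]; apply: (fle_trans A _ (pc_pc_ge _)).
  apply: (fle_trans A (pc_pc_ge _)).
  apply: (fsup_ub A); exists (e_cu r); split => //; by exists r.
move=> y [z [[r [hr ->]] ->]] /=; apply: pcpc_mono; apply: (fsup_ub A); by exists r.
Qed.

Lemma e_ext r s : r < s -> fjoin (e_cl r) (e_cu s) = ftop BLf.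
Proof.
move=> h; apply: top_eq; rewrite /fle /= /Ble BL_top.
rewrite -(cbar_ext f h); apply: (fle_trans A _ (pc_pc_ge _)).
apply: join_least.
  apply: (fle_trans A (pc_pc_ge _)); apply: (fsup_ub A); exists (e_cl r); split => //; by left.
apply: (fle_trans A (pc_pc_ge _)); apply: (fsup_ub A); exists (e_cu s); split => //; by right.
Qed.

Definition e : cbar BLf := Cbar e_r1 e_r3 e_r4 e_ext.
End E.

Lemma e_neg (f : cbar L) : e (neg_cbar f) = neg_cbar (e f).
Proof. by apply: cbar_eq => r; apply: Beq. Qed.

Lemma e_mono (x y : cbar L) : cbar_le x y -> cbar_le (e x) (e y).
Proof. move=> [h _]; apply: cbar_le_cl => r; exact: pcpc_mono. Qed.

Lemma e_refl (x y : cbar L) : cbar_le (e x) (e y) -> cbar_le x y.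
Proof.
move=> [h _]; apply: cbar_le_cl => r; rewrite [X in fle X _]cbar_r3.
apply: (fsup_least A) => z [s [hs ->]].
apply: (fle_trans A (pc_pc_ge _)); apply: (fle_trans A (h s)).
exact: rb_pcpc (cbar_rb y hs).
Qed.

End BoolL.
Definition tau (s p : rat) := s - p / (1 - p).
Lemma tau_le s p : 0 <= p -> p < 1 -> tau s p <= s.
Proof. move=> h0 h1; rewrite /tau gerBl divr_ge0 //; lra. Qed.
Lemma tau_sep (s r1 r2 : rat) : r1 < r2 -> r2 < s -> exists p1 p2,
  [/\ 0 <= p1, p1 < p2, p2 < 1, r1 < tau s p2 &
   forall p, 0 <= p -> p < 1 -> r2 < tau s p -> p < p1].
Proof.
move=> h12 h2s.
set D := s - r2; set E := s - (r1 + r2) / 2.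
have hD : 0 < D by rewrite /D; lra.
have hDE : D < E by rewrite /D /E; lra.
exists (D / (1 + D)), (E / (1 + E)); split.
- rewrite divr_ge0 //; lra.
- rewrite ltr_pdivrMr; last lra.
  rewrite mulrAC ltr_pdivlMr; last lra.
  nra.
- rewrite ltr_pdivrMr; last lra. lra.
- rewrite /tau.
  have -> : E / (1 + E) / (1 - E / (1 + E)) = E.
    field. apply/andP; split; lra.
  rewrite /E; lra.
- move=> p h0 h1; rewrite /tau => h.
  have : p / (1 - p) < D by rewrite /D; lra.
  rewrite ltr_pdivrMr; last lra.
  move=> h'; rewrite ltr_pdivlMr; last lra.
  nra.
Qed.

Section Dens.
Variable L : frame.
Hypothesis hL : completely_regular L.
Let A := fax L.

Lemma rb_le' (a b : L) : rather_below a b -> fle a b.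
Proof. exact: rb_le. Qed.

Section Ury.
Variables (c : rat -> L) (s : rat).
Hypothesis hc : forall p q : rat, 0 <= p -> p < q -> q <= 1 -> rather_below (c p) (c q).

Definition uc (r : rat) : L :=
  fsup (fun z => exists p, [/\ 0 <= p, p < 1, r < tau s p & z = c p]).

Lemma uc_h3 r : uc r = fsup (fun x => exists t, r < t /\ x = uc t).
Proof.
apply: (fle_anti A).
  apply: (fsup_least A) => z [p [h0 h1 h2 ->]].
  have [m1 m2] := midQ h2.
  apply: (fle_trans A _ (fsup_ub A (ex_intro _ ((r + tau s p) / 2) (conj m1 erefl)))).
  by rewrite /uc; apply: (fsup_ub A); exists p; split.
apply: (fsup_least A) => x [t [ht ->]].
apply: (fsup_least A) => z [p [h0 h1 h2 ->]].
apply: (fsup_ub A); exists p; split => //; exact: lt_trans ht h2.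
Qed.

Lemma c_le p q : 0 <= p -> p <= q -> q <= 1 -> fle (c p) (c q).
Proof.
move=> h0; rewrite le_eqVlt => /orP [/eqP->|h] h1; first exact: (fle_refl A).
exact: rb_le (hc h0 h h1).
Qed.

Lemma uc_rb r1 r2 : r1 < r2 -> fjoin (pc (uc r2)) (uc r1) = ftop L.
Proof.
move=> h12; case: (ltP r2 s) => h2s.
  have [p1 [p2 [h0 hp hp2 hr1 hall]]] := tau_sep h12 h2s.
  apply: top_eq; rewrite -(hc h0 hp (ltW hp2)); apply: join_mono.
    apply: pc_anti; apply: (fsup_least A) => z [p [g0 g1 g2 ->]].
    apply: c_le => //; [exact: ltW (hall p g0 g1 g2) | exact: ltW (lt_trans hp hp2)].
  apply: (fsup_ub A); exists p2; split => //; exact: le_trans h0 (ltW hp).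
have -> : uc r2 = fbot L.
  apply: bot_eq; apply: (fsup_least A) => z [p [g0 g1 g2 ->]].
  have := tau_le s g0 g1; lra.
by rewrite pc_bot; apply: top_eq; apply: join_l.
Qed.

Definition ury : cbar L := mk_cbar uc_h3 uc_rb.
End Ury.

Lemma join_dense (g : cbar (BLf L)) :
  is_lub (@cbar_le (BLf L)) (fun z => exists x, z = e x /\ cbar_le z g) g.
Proof.
split; first by move=> z [x [-> h]].
move=> h hub; apply: cbar_le_cl => r; rewrite /fle /= /Ble.
rewrite [in X in fle X _](cbar_r3 g r) /= [X in fle _ X](reg (cl h r)).
apply: pcpc_mono; apply: (fsup_least A) => x [y [[s [hs ->]] ->]].
set X := proj1_sig (cl g s).
apply: (fle_trans A (_ : fle X (fsup (fun a => completely_below a X)))).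
  rewrite -hL; exact: (fle_refl A).
apply: (fsup_least A) => a [c [c0 [c1 hc]]].
pose f := ury s hc.
have hfg : cbar_le (e f) g.
  apply: cbar_le_cl => r'; rewrite /fle /= /Ble /=.
  rewrite [X in fle _ X](reg (cl g r')); apply: pcpc_mono.
  apply: (fsup_least A) => z [p [g0 g1 g2 ->]].
  apply: (fle_trans A (c_le hc g0 (ltW g1) (lexx _))); rewrite c1.
  have := cl_anti g (le_trans (ltW g2) (tau_le s g0 g1)); by [].
have [hle _] := hub _ (ex_intro _ f (conj erefl hfg)).
have := hle r; rewrite /fle /= /Ble /= => hr.
apply: (fle_trans A _ hr); apply: (fle_trans A _ (pc_pc_ge _)).
rewrite /f /ury /= /uc; apply: (fsup_ub A); exists 0; split => //.
  by rewrite /tau mul0r subr0.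
Qed.

Lemma meet_dense (g : cbar (BLf L)) :
  is_glb (@cbar_le (BLf L)) (fun z => exists x, z = e x /\ cbar_le g z) g.
Proof.
split; first by move=> z [x [-> h]].
move=> h hlb.
have [_ hl] := join_dense (neg_cbar g).
have : cbar_le (neg_cbar g) (neg_cbar h).
  apply: hl => z [x [-> hx]].
  have h1 : cbar_le g (e (neg_cbar x)).
    rewrite e_neg -[g]neg_neg; exact: neg_le.
  have := neg_le (hlb _ (ex_intro _ _ (conj erefl h1))).
  by rewrite e_neg neg_neg.
by move/neg_le; rewrite !neg_neg.
Qed.

End Dens.

Theorem corollary3p10 (L : frame) (hL : completely_regular L) :
  exists e : cbar L -> cbar (Booleanization L),
    DM_completion (@cbar_le L) (@cbar_le (Booleanization L)) e.
Proof.
exists (@e L); split.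
- exact: (@cbar_complete (BLf L) (@BL_bool L)).
- move=> x y; split; [exact: e_mono | exact: e_refl].
- exact: join_dense.
- exact: meet_dense.
Qed.
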